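(* For every integer $k\ge1$, \[ \sum_{n=1}^\infty\frac{P_k(H_n,H_n^{(2)},\dots,H_n^{(k)})}{(n+2)^2}=\sum_{j=2}^{k+2}\zeta(j)-(k+1). \]
   Context: $H_n^{(r)}=\sum_{t=1}^n t^{-r}$, $H_n=H_n^{(1)}$. For $n\ge1$, $P_n(y_1,\dots,y_n)=\sum_{m_1+2m_2+\cdots=n}\frac{(-1)^{m_2+m_4+\cdots}}{m_1!m_2!\cdots}\prod_{i\ge1}(y_i/i)^{m_i}$ (sum over tuples of nonnegative integers), so that $P_k(H_n,\dots,H_n^{(k)})=\sum_{1\le n_1<\cdots<n_k\le n}\frac{1}{n_1\cdots n_k}$. $\zeta$ is the Riemann zeta function. *)

(* Defs.v *)
From Stdlib Require Import Reals Lra List Arith ClassicalEpsilon.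
Import ListNotations.
Open Scope R_scope.

Fixpoint Hr (r n : nat) : R :=
  match n with
  | O => 0
  | S m => Hr r m + / (INR (S m)) ^ r
  end.

Fixpoint tuples (len b : nat) : list (list nat) :=
  match len with
  | O => [nil]
  | S l => flat_map (fun t => map (fun a => a :: t) (seq 0 (S b))) (tuples l b)
  end.

Fixpoint weight (i : nat) (m : list nat) : nat :=
  match m with
  | nil => O
  | a :: t => (i * a + weight (S i) t)%nat
  end.

Fixpoint pterm (i : nat) (y : nat -> R) (m : list nat) : R :=
  match m with
  | nil => 1
  | a :: t =>
      (if Nat.even i then (-1) ^ a else 1) / INR (fact a)
      * (y i / INR i) ^ a * pterm (S i) y t
  end.

(* P_k(y_1,...,y_k): sum over (m_1,...,m_k) with m_1 + 2 m_2 + ... + k m_k = k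
   (necessarily each m_i <= k, and m_i = 0 for i > k).  y i stands for y_i. *)
Definition P (k : nat) (y : nat -> R) : R :=
  fold_right Rplus 0
    (map (pterm 1 y) (filter (fun m => Nat.eqb (weight 1 m) k) (tuples k k))).

Definition zeta (s : nat) : R :=
  epsilon (inhabits 0)
    (fun l => infinite_sum (fun n => / (INR (S n)) ^ s) l).

(* Main.v *)
Require Import Defs.
From Stdlib Require Import Reals.
From Stdlib Require Import Lra Lia Arith List ClassicalEpsilon.
Import ListNotations.
Open Scope R_scope.

Lemma is_sum_ext f g l : (forall n, f n = g n) -> infinite_sum f l -> infinite_sum g l.
Proof.
  intros H Hf eps He. destruct (Hf eps He) as [N HN]. exists N; intros n Hn.
  replace (sum_f_R0 g n) with (sum_f_R0 f n) by (apply sum_eq; auto). auto.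
Qed.

Lemma is_sum_unique f l1 l2 : infinite_sum f l1 -> infinite_sum f l2 -> l1 = l2.
Proof. intros H1 H2. exact (UL_sequence _ _ _ H1 H2). Qed.

Lemma is_sum_plus f g l1 l2 : infinite_sum f l1 -> infinite_sum g l2 ->
  infinite_sum (fun n => f n + g n) (l1 + l2).
Proof.
  intros H1 H2. assert (H := CV_plus _ _ _ _ H1 H2).
  intros eps He; destruct (H eps He) as [N HN]; exists N; intros n Hn.
  rewrite sum_plus; apply HN; auto.
Qed.

Lemma is_sum_minus f g l1 l2 : infinite_sum f l1 -> infinite_sum g l2 ->
  infinite_sum (fun n => f n - g n) (l1 - l2).
Proof.
  intros H1 H2. assert (H := CV_minus _ _ _ _ H1 H2).
  intros eps He; destruct (H eps He) as [N HN]; exists N; intros n Hn.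
  rewrite minus_sum; apply HN; auto.
Qed.

Lemma cv_const c : Un_cv (fun _ => c) c.
Proof. intros eps He; exists O; intros; unfold Rdist; rewrite Rminus_diag, Rabs_R0; lra. Qed.

Lemma is_sum_scal f l c : infinite_sum f l -> infinite_sum (fun n => c * f n) (c * l).
Proof.
  intros H1. assert (H := CV_mult _ _ _ _ (cv_const c) H1).
  intros eps He; destruct (H eps He) as [N HN]; exists N; intros n Hn.
  specialize (HN n Hn); cbv beta in HN; rewrite scal_sum in HN. replace (sum_f_R0 (fun n0 : nat => c * f n0) n) with
   (sum_f_R0 (fun i : nat => f i * c) n) by (apply sum_eq; intros; ring). exact HN.
Qed.

Lemma sum_shift f n : sum_f_R0 f (S n) = f O + sum_f_R0 (fun i => f (S i)) n.
Proof. induction n; simpl in *; [ring|]. rewrite IHn. ring. Qed.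

Lemma is_sum_shift f l : infinite_sum f l -> infinite_sum (fun i => f (S i)) (l - f O).
Proof.
  intros H eps He. destruct (H eps He) as [N HN]. exists N; intros n Hn.
  assert (HH := HN (S n) ltac:(lia)). rewrite sum_shift in HH. unfold Rdist in *.
  replace (sum_f_R0 (fun i : nat => f (S i)) n - (l - f 0%nat)) with
    (f 0%nat + sum_f_R0 (fun i : nat => f (S i)) n - l) by ring. auto.
Qed.

Lemma is_sum_unshift f l : infinite_sum (fun i => f (S i)) (l - f O) -> infinite_sum f l.
Proof.
  intros H eps He. destruct (H eps He) as [N HN]. exists (S N); intros n Hn.
  destruct n as [|n]; [lia|]. assert (HH := HN n ltac:(lia)). rewrite sum_shift. unfold Rdist in *.
  replace (f 0%nat + sum_f_R0 (fun i : nat => f (S i)) n - l) with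
   (sum_f_R0 (fun i : nat => f (S i)) n - (l - f 0%nat)) by ring. auto.
Qed.

Lemma is_sum_tail j : forall h L, infinite_sum (fun i => h (i + S j)%nat) L ->
  infinite_sum (fun i => if Nat.ltb j i then h i else 0) L.
Proof.
  induction j; intros h L H.
  - apply is_sum_unshift. simpl. replace (L - 0) with L by ring.
    eapply is_sum_ext; [|exact H]. intros n; simpl. f_equal; lia.
  - apply is_sum_unshift. simpl. replace (L - 0) with L by ring.
    apply (IHj (fun i => h (S i))). eapply is_sum_ext; [|exact H]. intros n; simpl. f_equal; lia.
Qed.

Lemma is_sum_finite f N0 : (forall j, (N0 < j)%nat -> f j = 0) -> infinite_sum f (sum_f_R0 f N0).
Proof.
  intros H eps He. exists N0; intros n Hn. unfold Rdist.
  replace (sum_f_R0 f n) with (sum_f_R0 f N0). rewrite Rminus_diag, Rabs_R0; lra.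
  induction Hn; auto. simpl. rewrite H by lia. rewrite IHHn. ring.
Qed.

Lemma is_sum_telescope f g : (forall i, f i = g i - g (S i)) -> Un_cv g 0 ->
  infinite_sum f (g O).
Proof.
  intros Hf Hg eps He. destruct (Hg eps He) as [N HN]. exists N; intros n Hn.
  assert (E : sum_f_R0 f n = g O - g (S n)).
  { clear Hn; induction n; simpl; rewrite Hf; [ring|]. rewrite IHn. ring. }
  rewrite E. assert (HH := HN (S n) ltac:(lia)). unfold Rdist in *.
  replace (g 0%nat - g (S n) - g 0%nat) with (- (g (S n) - 0)) by ring. rewrite Rabs_Ropp; auto.
Qed.

Lemma cv_inv_bound g : (forall N, 0 <= g N <= / INR (S N)) -> Un_cv g 0.
Proof.
  intros H eps He. destruct (INR_archimed eps 1 He) as [N HN]. exists N; intros n Hn.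
  unfold Rdist. rewrite Rminus_0_r. destruct (H n) as [H1 H2]. rewrite Rabs_right by lra.
  eapply Rle_lt_trans; [exact H2|]. apply le_INR in Hn. rewrite S_INR.
  apply (Rmult_lt_reg_r (INR n + 1)); [pose proof (pos_INR n); lra|].
  rewrite Rinv_l by (pose proof (pos_INR n); lra). nra.
Qed.

Lemma sum_swap (a : nat -> nat -> R) M N :
  sum_f_R0 (fun m => sum_f_R0 (a m) N) M = sum_f_R0 (fun n => sum_f_R0 (fun m => a m n) M) N.
Proof.
  induction M; simpl. reflexivity. rewrite IHM, <- sum_plus. apply sum_eq; intros; simpl; ring.
Qed.

Lemma cv_sum_fin (u : nat -> nat -> R) (c : nat -> R) N :
  (forall n, Un_cv (fun M => u M n) (c n)) -> Un_cv (fun M => sum_f_R0 (u M) N) (sum_f_R0 c N).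
Proof.
  intros H; induction N; simpl. apply H. apply CV_plus; auto.
Qed.

Lemma sum_nonneg f N : (forall n, 0 <= f n) -> 0 <= sum_f_R0 f N.
Proof. intros H; induction N; simpl; [apply H|]. pose proof (H (S N)); lra. Qed.

Lemma sum_mono f N1 N2 : (forall n, 0 <= f n) -> (N1 <= N2)%nat -> sum_f_R0 f N1 <= sum_f_R0 f N2.
Proof. intros H Hle; induction Hle; [lra|]. simpl. pose proof (H (S m)); lra. Qed.

Lemma sum_le f g N : (forall n, f n <= g n) -> sum_f_R0 f N <= sum_f_R0 g N.
Proof. intros H; induction N; simpl; [apply H|]. pose proof (H (S N)); lra. Qed.

Lemma tonelli (a : nat -> nat -> R) (r c : nat -> R) (Ssum : R) :
  (forall m n, 0 <= a m n) -> (forall m, infinite_sum (a m) (r m)) ->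
  (forall n, infinite_sum (fun m => a m n) (c n)) -> infinite_sum r Ssum -> infinite_sum c Ssum.
Proof.
  intros Ha Hr Hc HS.
  assert (Hrp : forall m N, sum_f_R0 (a m) N <= r m).
  { intros m N. apply sum_incr; [apply Hr|auto]. }
  assert (Hcp : forall n M, sum_f_R0 (fun m => a m n) M <= c n).
  { intros n M. apply sum_incr; [apply Hc|auto]. }
  assert (Hc0 : forall n, 0 <= c n).
  { intros n. eapply Rle_trans; [|apply (Hcp n O)]. simpl; auto. }
  assert (Hr0 : forall m, 0 <= r m).
  { intros m. eapply Rle_trans; [|apply (Hrp m O)]. simpl; auto. }
  assert (Hup : forall N, sum_f_R0 c N <= Ssum).
  { intros N.
    assert (C1 := cv_sum_fin (fun M n => sum_f_R0 (fun m => a m n) M) c N (fun n => Hc n)).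
    refine (Rle_cv_lim _ C1 (cv_const Ssum)). intros M. cbv beta.
    rewrite <- sum_swap. eapply Rle_trans; [apply sum_le; intros m; apply Hrp| apply sum_incr; [exact HS|auto]]. }
  assert (Hlow : forall eps, eps > 0 -> exists N, Ssum - eps < sum_f_R0 c N).
  { intros eps He. destruct (HS (eps/2) ltac:(lra)) as [M HM].
    assert (C2 := cv_sum_fin (fun N m => sum_f_R0 (a m) N) r M (fun m => Hr m)).
    destruct (C2 (eps/2) ltac:(lra)) as [N HN]. exists N.
    assert (H1 := HM M (le_n _)). assert (H2 := HN N (le_n _)). unfold Rdist in *. simpl in H2.
    rewrite sum_swap in H2.
    assert (H3 : sum_f_R0 (fun n => sum_f_R0 (fun m => a m n) M) N <= sum_f_R0 c N)
      by (apply sum_le; auto).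
    apply Rabs_def2 in H1; apply Rabs_def2 in H2. lra. }
  intros eps He. destruct (Hlow eps He) as [N HN]. exists N; intros n Hn.
  unfold Rdist. pose proof (sum_mono c N n Hc0 Hn). pose proof (Hup n).
  apply Rabs_def1; lra.
Qed.

Fixpoint e (k : nat) : nat -> R :=
  match k with
  | O => fun _ => 1
  | S k' => fix g n := match n with O => 0 | S n' => g n' + e k' n' / INR (S n') end
  end.

Lemma e_SS k n : e (S k) (S n) = e (S k) n + e k n / INR (S n).
Proof. reflexivity. Qed.
Lemma e_S0 k : e (S k) O = 0.
Proof. reflexivity. Qed.
Lemma e_0 n : e O n = 1.
Proof. reflexivity. Qed.

Lemma INR_S_pos n : 0 < INR (S n).
Proof. apply lt_0_INR; lia. Qed.

Lemma e_nonneg k n : 0 <= e k n.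
Proof.
  revert n; induction k; intros n; [simpl; lra|].
  induction n; [rewrite e_S0; lra|]. rewrite e_SS.
  pose proof (IHk n). pose proof (INR_S_pos n).
  assert (0 <= e k n / INR (S n)) by (unfold Rdiv; apply Rmult_le_pos; [lra|left; apply Rinv_0_lt_compat; lra]). lra.
Qed.

Fixpoint ps (x : nat -> R) (i : nat) : R :=
  match i with O => 0 | S i' => ps x i' + x i' end.

Lemma e_ps r i : e (S r) i = ps (fun j => e r j / INR (S j)) i.
Proof. induction i; [reflexivity|]. rewrite e_SS, IHi. reflexivity. Qed.

Lemma sum_ind_ps x i N : sum_f_R0 (fun j => if Nat.ltb j i then x j else 0) N = ps x (Nat.min i (S N)).
Proof.
  induction N.
  - destruct i; simpl; [reflexivity|]. destruct i; simpl; ring.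
  - rewrite tech5, IHN. destruct (Nat.ltb_spec (S N) i).
    + replace (Nat.min i (S (S N))) with (S (S N)) by lia.
      replace (Nat.min i (S N)) with (S N) by lia. reflexivity.
    + replace (Nat.min i (S (S N))) with i by lia.
      replace (Nat.min i (S N)) with i by lia. ring.
Qed.

Lemma col_sum (x w : nat -> R) i :
  infinite_sum (fun j => (if Nat.ltb j i then x j else 0) * w i) (ps x i * w i).
Proof.
  replace (ps x i * w i) with (sum_f_R0 (fun j => (if Nat.ltb j i then x j else 0) * w i) i).
  - apply is_sum_finite. intros j Hj. destruct (Nat.ltb_spec j i); [lia|ring].
  - rewrite <- (scal_sum (fun j => if Nat.ltb j i then x j else 0)). rewrite sum_ind_ps.
    replace (Nat.min i (S i)) with i by lia. ring.
Qed.

Lemma cv_shift g l k : Un_cv g l -> Un_cv (fun i => g (i + k)%nat) l.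
Proof. intros H eps He; destruct (H eps He) as [N HN]; exists N; intros n Hn; apply HN; lia. Qed.

Lemma tele_tail (h g : nat -> R) j : (forall i, h i = g i - g (S i)) -> Un_cv g 0 ->
  infinite_sum (fun i => if Nat.ltb j i then h i else 0) (g (S j)).
Proof.
  intros Hh Hg. apply is_sum_tail.
  replace (g (S j)) with (g (0 + S j)%nat) by reflexivity.
  apply (is_sum_telescope _ (fun i => g (i + S j)%nat)); [|apply cv_shift; auto].
  intros i. rewrite Hh. reflexivity.
Qed.

Lemma row_sum (x w : nat -> R) j L :
  infinite_sum (fun i => if Nat.ltb j i then w i else 0) L ->
  infinite_sum (fun i => (if Nat.ltb j i then x j else 0) * w i) (x j * L).
Proof.
  intros H. eapply is_sum_ext; [|apply (is_sum_scal _ _ (x j) H)].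
  intros i; simpl. destruct (Nat.ltb j i); ring.
Qed.

Definition Cb (m n : nat) : R := INR (fact m) * INR (fact n) / INR (fact (m + n)).

Lemma fact_pos' n : 0 < INR (fact n).
Proof. apply lt_0_INR. apply lt_O_fact. Qed.

Lemma Cb_pos m n : 0 < Cb m n.
Proof.
  unfold Cb. pose proof (fact_pos' m); pose proof (fact_pos' n); pose proof (fact_pos' (m+n)).
  unfold Rdiv. apply Rmult_lt_0_compat; [nra|]. apply Rinv_0_lt_compat; lra.
Qed.

Lemma Cb_sym m n : Cb m n = Cb n m.
Proof. unfold Cb. rewrite Nat.add_comm. unfold Rdiv; ring. Qed.

Lemma Cb_0 m : Cb m 0 = 1.
Proof. unfold Cb. rewrite Nat.add_0_r. simpl. field. pose proof (fact_pos' m); lra. Qed.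

Lemma Cb_rel m n : Cb m n = Cb m (S n) * INR (m + S n) / INR (S n).
Proof.
  unfold Cb. replace (m + S n)%nat with (S (m + n)) by lia.
  rewrite !fact_simpl, !mult_INR.
  pose proof (fact_pos' n); pose proof (fact_pos' (m+n)); pose proof (INR_S_pos n); pose proof (INR_S_pos (m+n)).
  field. lra.
Qed.

Lemma Cb_step m n : (1 <= m)%nat -> Cb m (S n) / INR (S n) = Cb m n / INR m - Cb m (S n) / INR m.
Proof.
  intros Hm. rewrite (Cb_rel m n). rewrite plus_INR, S_INR.
  assert (0 < INR m) by (apply lt_0_INR; lia). pose proof (pos_INR n). field. lra.
Qed.

Lemma Cb_decr m n : Cb (S m) n <= Cb m n.
Proof.
  rewrite (Cb_sym (S m)), (Cb_sym m). rewrite (Cb_rel n m). rewrite plus_INR, !S_INR.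
  pose proof (pos_INR n); pose proof (pos_INR m). pose proof (Cb_pos n (S m)).
  apply (Rmult_le_reg_r (INR m + 1)); [lra|]. unfold Rdiv. rewrite Rmult_assoc, Rinv_l by lra. nra.
Qed.

Lemma Cb_1 n : Cb 1 n = / INR (S n).
Proof.
  unfold Cb. change (1 + n)%nat with (S n). rewrite (fact_simpl n), mult_INR. change (fact 1) with 1%nat.
  pose proof (fact_pos' n); pose proof (INR_S_pos n). change (INR 1) with 1. field. lra.
Qed.

Lemma Cb_le m n : (1 <= m)%nat -> Cb m n <= / INR (S n).
Proof.
  intros Hm. induction Hm. rewrite Cb_1; lra. eapply Rle_trans; [apply Cb_decr|auto].
Qed.

Lemma Cb_cv m : (1 <= m)%nat -> Un_cv (fun n => Cb m n) 0.
Proof.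
  intros Hm. apply cv_inv_bound. intros N. split; [left; apply Cb_pos| apply Cb_le; auto].
Qed.

Lemma Cb_cv_m g : Un_cv (fun n => g n) 0 -> forall c, Un_cv (fun n => g n / c) 0.
Proof.
  intros H c. assert (H2 := CV_mult _ _ _ _ H (cv_const (/ c))). rewrite Rmult_0_l in H2. exact H2.
Qed.

Lemma Cb_tail m j : (1 <= m)%nat ->
  infinite_sum (fun i => if Nat.ltb j i then Cb m (S i) / INR (S i) else 0) (Cb m (S j) / INR m).
Proof.
  intros Hm. apply (tele_tail _ (fun i => Cb m i / INR m)).
  - intros i. apply Cb_step; auto.
  - apply Cb_cv_m, Cb_cv; auto.
Qed.

Lemma Cb_full m : (1 <= m)%nat ->
  infinite_sum (fun i => Cb m (S i) / INR (S i)) (/ INR m).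
Proof.
  intros Hm. replace (/ INR m) with (Cb m 0 / INR m) by (rewrite Cb_0; field; apply not_0_INR; lia).
  apply (is_sum_telescope _ (fun i => Cb m i / INR m)).
  - intros i. apply Cb_step; auto.
  - apply Cb_cv_m, Cb_cv; auto.
Qed.

Definition w2 (i : nat) : R := / (INR (S i) * INR (S (S i))).

Lemma w2_step i : w2 i = / INR (S i) - / INR (S (S i)).
Proof. unfold w2. pose proof (INR_S_pos i). rewrite (S_INR (S i)). field. lra. Qed.

Lemma inv_cv : Un_cv (fun i => / INR (S i)) 0.
Proof. apply cv_inv_bound. intros N; split; [left; apply Rinv_0_lt_compat, INR_S_pos| lra]. Qed.

Lemma w2_pos i : 0 < w2 i.
Proof. unfold w2. pose proof (INR_S_pos i); pose proof (INR_S_pos (S i)). apply Rinv_0_lt_compat; nra. Qed.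

Lemma w2_tail j : infinite_sum (fun i => if Nat.ltb j i then w2 i else 0) (/ INR (S (S j))).
Proof. apply (tele_tail _ (fun i => / INR (S i))); [apply w2_step|apply inv_cv]. Qed.

Lemma F1 r : infinite_sum (fun i => e r i * w2 i) 1.
Proof.
  induction r.
  - assert (H : infinite_sum w2 (/ INR 1)).
    { apply (is_sum_telescope w2 (fun i => / INR (S i))); [apply w2_step|apply inv_cv]. }
    change (INR 1) with 1 in H. rewrite Rinv_1 in H.
    eapply is_sum_ext; [|exact H]. intros; simpl; ring.
  - apply (tonelli (fun j i => (if Nat.ltb j i then e r j / INR (S j) else 0) * w2 i)
              (fun j => e r j / INR (S j) * / INR (S (S j)))).
    + intros j i. destruct (Nat.ltb j i); [|lra]. pose proof (e_nonneg r j).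
      pose proof (INR_S_pos j). unfold Rdiv.
      apply Rmult_le_pos; [apply Rmult_le_pos; [auto| left; apply Rinv_0_lt_compat; auto] | left; apply w2_pos].
    + intros j. apply (row_sum (fun j => e r j / INR (S j)) w2 j), w2_tail.
    + intros i. rewrite e_ps. apply (col_sum (fun j => e r j / INR (S j)) w2 i).
    + eapply is_sum_ext; [|exact IHr]. intros j. unfold w2. rewrite Rinv_mult. unfold Rdiv; ring.
Qed.

Lemma nn_div a b : 0 <= a -> 0 < b -> 0 <= a / b.
Proof. intros; unfold Rdiv; apply Rmult_le_pos; [auto|left; apply Rinv_0_lt_compat; auto]. Qed.

Lemma Jr r m : (1 <= m)%nat ->
  infinite_sum (fun i => e r i / INR (S i) * Cb m (S i)) (/ INR m ^ S r).
Proof.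
  intros Hm. assert (Hm0 : 0 < INR m) by (apply lt_0_INR; lia).
  induction r.
  - eapply is_sum_ext; [|rewrite pow_1; apply (Cb_full m Hm)]. intros; rewrite e_0; field.
    pose proof (INR_S_pos n). lra.
  - apply (tonelli (fun j i => (if Nat.ltb j i then e r j / INR (S j) else 0) * (Cb m (S i) / INR (S i)))
              (fun j => e r j / INR (S j) * (Cb m (S j) / INR m))).
    + intros j i. cbv beta. destruct (Nat.ltb j i); [|lra]. pose proof (e_nonneg r j).
      pose proof (INR_S_pos j). pose proof (INR_S_pos i). pose proof (Cb_pos m (S i)).
      apply Rmult_le_pos; apply nn_div; lra.
    + intros j. apply (row_sum (fun j => e r j / INR (S j)) (fun i => Cb m (S i) / INR (S i)) j).
      apply Cb_tail; auto.
    + intros i.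
      replace (e (S r) i / INR (S i) * Cb m (S i)) with
        (ps (fun j => e r j / INR (S j)) i * (Cb m (S i) / INR (S i)))
        by (rewrite e_ps; unfold Rdiv; ring).
      apply (col_sum (fun j => e r j / INR (S j)) (fun i => Cb m (S i) / INR (S i)) i).
    + replace (/ INR m ^ S (S r)) with (/ INR m * / INR m ^ S r)
        by (simpl; field; split; try apply pow_nonzero; lra).
      eapply is_sum_ext; [|apply (is_sum_scal _ _ (/ INR m) IHr)]. intros; simpl; unfold Rdiv; ring.
Qed.

Lemma zeta_term_le j n : (2 <= j)%nat -> / INR (S n) ^ j <= 2 * w2 n.
Proof.
  intros Hj. pose proof (INR_S_pos n). assert (H1 : 1 <= INR (S n)) by (rewrite S_INR; pose proof (pos_INR n); lra).
  apply Rle_trans with (/ INR (S n) ^ 2).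
  - apply Rinv_le_contravar. apply pow_lt; lra. apply Rle_pow; auto.
  - unfold w2. rewrite (S_INR (S n)). rewrite S_INR in *. pose proof (pos_INR n).
    apply (Rmult_le_reg_r ((INR n + 1)^2 * (INR n + 1 + 1))). nra.
    field_simplify; try nra. 
Qed.

Lemma zeta_spec j : (2 <= j)%nat -> infinite_sum (fun n => / INR (S n) ^ j) (zeta j).
Proof.
  intros Hj. unfold zeta. apply epsilon_spec.
  assert (Hpos : forall n, 0 <= / INR (S n) ^ j).
  { intros n. left. apply Rinv_0_lt_compat, pow_lt, INR_S_pos. }
  destruct (growing_cv (sum_f_R0 (fun n => / INR (S n) ^ j))) as [l Hl].
  - intros n. cbv beta. rewrite tech5. pose proof (Hpos (S n)). lra.
  - exists 2. intros x [i ->].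
    apply Rle_trans with (sum_f_R0 (fun n => 2 * w2 n) i).
    + apply sum_le. intros; apply zeta_term_le; auto.
    + rewrite <- (scal_sum w2 i 2) || idtac.
      replace (sum_f_R0 (fun n => 2 * w2 n) i) with (2 * sum_f_R0 w2 i)
        by (rewrite scal_sum; apply sum_eq; intros; ring).
      assert (sum_f_R0 w2 i <= 1).
      { apply sum_incr. eapply is_sum_ext; [|apply (F1 0)]. intros; simpl; ring.
        intros; left; apply w2_pos. }
      lra.
  - exists l. exact Hl.
Qed.

Lemma F2 r : infinite_sum (fun i => e r i / INR (S i) ^ 2) (zeta (S (S r))).
Proof.
  apply (tonelli (fun m i => / INR (S m) * (e r i / INR (S i) * Cb (S m) (S i)))
                 (fun m => / INR (S m) ^ S (S r))).
  - intros m i. pose proof (e_nonneg r i). pose proof (INR_S_pos i). pose proof (INR_S_pos m).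
    pose proof (Cb_pos (S m) (S i)).
    apply Rmult_le_pos; [left; apply Rinv_0_lt_compat; auto|]. apply Rmult_le_pos; [apply nn_div|]; lra.
  - intros m. replace (/ INR (S m) ^ S (S r)) with (/ INR (S m) * / INR (S m) ^ S r)
      by (change (INR (S m) ^ S (S r)) with (INR (S m) * INR (S m) ^ S r); rewrite Rinv_mult; reflexivity).
    apply is_sum_scal. apply Jr. lia.
  - intros i.
    replace (e r i / INR (S i) ^ 2) with (e r i / INR (S i) * / INR (S i))
      by (field; pose proof (INR_S_pos i); lra).
    eapply is_sum_ext; [|apply (is_sum_scal _ _ (e r i / INR (S i)) (Cb_full (S i) ltac:(lia)))].
    intros m; simpl. rewrite Cb_sym. unfold Rdiv; ring.
  - apply zeta_spec. lia.
Qed.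

Definition v k i := e k i / INR (S (S i)) ^ 2.
Definition VV k := sum_f 2 (k + 2) zeta - INR (k + 1).

Lemma VV_S k : VV (S k) = VV k + zeta (S k + 2) - 1.
Proof.
  unfold VV, sum_f. replace (S k + 2 - 2)%nat with (S k) by lia. replace (k + 2 - 2)%nat with k by lia.
  rewrite tech5. rewrite !plus_INR, S_INR. simpl (INR 1). ring.
Qed.

Lemma v_all k : infinite_sum (v k) (VV k).
Proof.
  induction k.
  - assert (H := is_sum_shift _ _ (zeta_spec 2 (le_n _))).
    replace (VV 0) with (zeta 2 - / INR 1 ^ 2).
    + eapply is_sum_ext; [|exact H]. intros i; unfold v; rewrite e_0. unfold Rdiv; ring.
    + unfold VV, sum_f. simpl. field.
  - rewrite VV_S.
    assert (H2 := is_sum_shift _ _ (F2 (S k))). cbv beta in H2; rewrite e_S0 in H2.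
    assert (H3 := is_sum_minus _ _ _ _ H2 (F1 k)).
    assert (H4 := is_sum_plus _ _ _ _ H3 IHk).
    replace (VV k + zeta (S k + 2) - 1) with (zeta (S (S (S k))) - 0 / INR 1 ^ 2 - 1 + VV k)
      by (replace (S k + 2)%nat with (S (S (S k))) by lia; unfold Rdiv; ring).
    eapply is_sum_ext; [|exact H4]. intros i. cbv beta. unfold v, w2. rewrite e_SS.
    pose proof (INR_S_pos i). pose proof (INR_S_pos (S i)). rewrite (S_INR (S i)).
    field. lra.
Qed.

Definition lsum {X} (f : X -> R) (l : list X) : R := fold_right Rplus 0 (map f l).

Lemma lsum_app {X} (f : X -> R) l1 l2 : lsum f (l1 ++ l2) = lsum f l1 + lsum f l2.
Proof. induction l1; simpl; unfold lsum in *; simpl; [ring|]. rewrite IHl1; ring. Qed.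

Lemma lsum_flat_map {X Y} (f : Y -> R) (g : X -> list Y) l :
  lsum f (flat_map g l) = lsum (fun x => lsum f (g x)) l.
Proof. induction l; [reflexivity|]. simpl. rewrite lsum_app, IHl. reflexivity. Qed.

Lemma lsum_map {X Y} (f : Y -> R) (g : X -> Y) l : lsum f (map g l) = lsum (fun x => f (g x)) l.
Proof. unfold lsum. rewrite map_map. reflexivity. Qed.

Lemma lsum_seq (f : nat -> R) B : lsum f (seq 0 (S B)) = sum_f_R0 f B.
Proof.
  induction B. unfold lsum; simpl; ring.
  rewrite seq_S, lsum_app, IHB. unfold lsum; simpl. ring.
Qed.

Lemma lsum_ext {X} (f g : X -> R) l : (forall x, f x = g x) -> lsum f l = lsum g l.
Proof. intros H; induction l; unfold lsum in *; simpl; [reflexivity|]. rewrite H, IHl; reflexivity. Qed.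

Lemma lsum_sum {X} (f : X -> nat -> R) l B :
  lsum (fun x => sum_f_R0 (f x) B) l = sum_f_R0 (fun a => lsum (fun x => f x a) l) B.
Proof.
  induction l; unfold lsum in *; simpl.
  - induction B; simpl; [reflexivity|]. rewrite <- IHB; ring.
  - rewrite IHl, <- sum_plus. apply sum_eq; intros; reflexivity.
Qed.

Lemma lsum_scal {X} (f : X -> R) l c : lsum (fun x => c * f x) l = c * lsum f l.
Proof. induction l; unfold lsum in *; simpl; [ring|]. rewrite IHl; ring. Qed.

Lemma lsum_zero {X} l : lsum (fun _ : X => 0) l = 0.
Proof. induction l; unfold lsum in *; simpl; [ring|]. rewrite IHl; ring. Qed.

Lemma lsum_filter {X} (f : X -> R) (p : X -> bool) l :
  fold_right Rplus 0 (map f (filter p l)) = lsum (fun x => if p x then f x else 0) l.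
Proof.
  induction l; [reflexivity|]. unfold lsum in *. simpl. destruct (p a) eqn:E; simpl; rewrite IHl; ring.
Qed.

Definition Q i L B w (y : nat -> R) :=
  lsum (fun m => if Nat.eqb (weight i m) w then pterm i y m else 0) (tuples L B).

Lemma P_Q k y : P k y = Q 1 k k k y.
Proof. unfold P, Q. apply lsum_filter. Qed.

Definition cc i a (y : nat -> R) := (if Nat.even i then (-1) ^ a else 1) / INR (fact a) * (y i / INR i) ^ a.

Lemma Q_0 i B w y : Q i 0 B w y = if Nat.eqb w 0 then 1 else 0.
Proof.
  unfold Q, lsum; simpl. destruct w; simpl; ring.
Qed.

Lemma tuples_S L B : tuples (S L) B = flat_map (fun t => map (fun a => a :: t) (seq 0 (S B))) (tuples L B).
Proof. reflexivity. Qed.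

Lemma Q_rec i L B w y : Q i (S L) B w y =
  sum_f_R0 (fun a => if Nat.leb (i * a) w then cc i a y * Q (S i) L B (w - i * a) y else 0) B.
Proof.
  unfold Q. rewrite tuples_S. rewrite lsum_flat_map.
  rewrite (lsum_ext _ (fun t => sum_f_R0 (fun a => if Nat.leb (i * a) w then
       cc i a y * (if Nat.eqb (weight (S i) t) (w - i * a) then pterm (S i) y t else 0) else 0) B)).
  - rewrite lsum_sum. apply sum_eq. intros a _. destruct (Nat.leb (i * a) w).
    + rewrite lsum_scal. reflexivity.
    + apply lsum_zero.
  - intros t. rewrite lsum_map, lsum_seq. apply sum_eq. intros a _. simpl weight. simpl pterm.
    destruct (Nat.leb_spec (i * a) w).
    + destruct (Nat.eqb_spec (i * a + weight (S i) t) w), (Nat.eqb_spec (weight (S i) t) (w - i * a));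
        try lia; unfold cc; ring.
    + destruct (Nat.eqb_spec (i * a + weight (S i) t) w); try lia. reflexivity.
Qed.

Definition sg (i : nat) : R := if Nat.even i then -1 else 1.

Lemma cc_0 i y : cc i 0 y = 1.
Proof. unfold cc. destruct (Nat.even i); simpl; field. Qed.

Lemma cc_step i a y : (1 <= i)%nat -> INR (i * S a) * cc i (S a) y = sg i * y i * cc i a y.
Proof.
  intros Hi. unfold cc, sg. rewrite fact_simpl, !mult_INR.
  assert (0 < INR i) by (apply lt_0_INR; lia). assert (0 < INR (S a)) by (apply lt_0_INR; lia). assert (0 < INR (fact a)) by (apply lt_0_INR, lt_O_fact).
  destruct (Nat.even i); simpl pow; field; lra.
Qed.


Lemma sum_zero f N : (forall j, (j <= N)%nat -> f j = 0) -> sum_f_R0 f N = 0.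
Proof. intros H; induction N; simpl. apply H; lia. rewrite IHN, H; [ring|lia|]. intros; apply H; lia. Qed.

Lemma sum_first f N : (forall j, f (S j) = 0) -> sum_f_R0 f N = f O.
Proof. intros H; induction N; simpl; [reflexivity|]. rewrite IHN, H; ring. Qed.

Lemma sum_point (g : nat -> R) i N :
  sum_f_R0 (fun j => if Nat.eqb j i then g j else 0) N = if Nat.leb i N then g i else 0.
Proof.
  induction N.
  - destruct i; reflexivity.
  - rewrite tech5, IHN. destruct (Nat.eqb_spec (S N) i), (Nat.leb_spec i N), (Nat.leb_spec i (S N));
      subst; try lia; ring.
Qed.

Lemma sum_extend f n N : (n <= N)%nat ->
  sum_f_R0 f n = sum_f_R0 (fun j => if Nat.leb j n then f j else 0) N.
Proof.
  intros H; induction H.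
  - apply sum_eq. intros j Hj. destruct (Nat.leb_spec j n); [reflexivity|lia].
  - rewrite IHle, tech5. destruct (Nat.leb_spec (S m) n); [lia|ring].
Qed.

Lemma Q_w0 L : forall i B y, (1 <= i)%nat -> Q i L B 0 y = 1.
Proof.
  induction L; intros i B y Hi.
  - rewrite Q_0. reflexivity.
  - rewrite Q_rec. rewrite sum_first.
    + rewrite Nat.mul_0_r. simpl. rewrite cc_0, IHL by lia. ring.
    + intros a. destruct (Nat.leb_spec (i * S a) 0); [nia|reflexivity].
Qed.

Lemma Q_newton L : forall i w B y, (1 <= i)%nat -> (w <= B)%nat -> (w < i + L)%nat ->
  INR w * Q i L B w y =
  sum_f_R0 (fun j => if Nat.leb i j then sg j * y j * Q i L B (w - j) y else 0) w.
Proof.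
  induction L; intros i w B y Hi HwB HwL.
  - rewrite sum_zero.
    + rewrite Q_0. destruct w; simpl; ring.
    + intros j Hj. destruct (Nat.leb_spec i j); [lia|reflexivity].
  - destruct w as [|w'].
    + simpl. destruct (Nat.leb_spec i 0); [lia|ring].
    + set (w := S w') in *. destruct B as [|B']; [lia|].
      set (Qn := fun w0 => Q (S i) L (S B') w0 y).
      set (H := fun a j => if andb (Nat.leb (S i) j) (Nat.leb (i * a + j) w)
                           then sg j * y j * (cc i a y * Qn (w - j - i * a)%nat) else 0).
      transitivity (sum_f_R0 (fun a => if Nat.leb (i * a) w then INR (i * a) * (cc i a y * Qn (w - i * a)%nat) else 0) (S B')
                    + sum_f_R0 (fun a => sum_f_R0 (H a) w) (S B')).
      { rewrite Q_rec. rewrite scal_sum, <- sum_plus. apply sum_eq. intros a Ha.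
        destruct (Nat.leb_spec (i * a) w) as [Hia|Hia].
        - fold (Qn (w - i * a)%nat).
          replace (cc i a y * Qn (w - i * a)%nat * INR w) with
            (INR (i * a) * (cc i a y * Qn (w - i * a)%nat) + cc i a y * (INR (w - i * a) * Qn (w - i * a)%nat))
            by (rewrite minus_INR by lia; ring).
          f_equal. unfold Qn. rewrite IHL by lia. rewrite (sum_extend _ (w - i * a) w) by lia.
          rewrite scal_sum. apply sum_eq. intros j Hj.
          unfold H. destruct (Nat.leb_spec j (w - i * a)), (Nat.leb_spec (S i) j), (Nat.leb_spec (i * a + j) w);
            cbn [andb]; try lia; try ring.
          replace (w - i * a - j)%nat with (w - j - i * a)%nat by lia. unfold Qn. ring.
        - rewrite sum_zero. ring. intros j Hj. unfold H.
          destruct (Nat.leb_spec (i * a + j) w); [lia|]. rewrite Bool.andb_false_r. reflexivity. }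
      rewrite sum_swap.
      rewrite (sum_eq (fun j => if Nat.leb i j then sg j * y j * Q i (S L) (S B') (w - j) y else 0) (fun j => (if Nat.eqb j i then sg j * y j * Q i (S L) (S B') (w - j) y else 0)
                                  + sum_f_R0 (fun a => H a j) (S B'))).
      2:{ intros j Hj. destruct (Nat.eqb_spec j i).
          - subst j. rewrite sum_zero. destruct (Nat.leb_spec i i); [ring|lia].
            intros a _. unfold H. destruct (Nat.leb_spec (S i) i); [lia|reflexivity].
          - destruct (Nat.leb_spec i j).
            + rewrite Q_rec, scal_sum. rewrite Rplus_0_l. apply sum_eq. intros a Ha. unfold H.
              destruct (Nat.leb_spec (i * a) (w - j)), (Nat.leb_spec (S i) j), (Nat.leb_spec (i * a + j) w);
                cbn [andb]; try lia; try ring.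
              unfold Qn. ring.
            + rewrite sum_zero. ring. intros a _. unfold H.
              destruct (Nat.leb_spec (S i) j); [lia|reflexivity]. }
      rewrite sum_plus, sum_point. f_equal.
      rewrite sum_shift. rewrite Nat.mul_0_r. simpl (INR 0). rewrite Rmult_0_l.
      destruct (Nat.leb_spec 0 w); [|lia]. rewrite Rplus_0_l.
      destruct (Nat.leb_spec i w) as [Hiw|Hiw].
      * rewrite Q_rec, tech5. fold (Qn (w - i - i * S B')%nat).
        destruct (Nat.leb_spec (i * S B') (w - i)); [nia|]. rewrite Rplus_0_r.
        rewrite scal_sum. apply sum_eq. intros a Ha.
        destruct (Nat.leb_spec (i * S a) w), (Nat.leb_spec (i * a) (w - i)); try nia.
        -- rewrite <- Rmult_assoc, cc_step by lia.
          replace (w - i * S a)%nat with (w - i - i * a)%nat by nia. unfold Qn. ring.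
        -- ring.
      * apply sum_zero. intros a _. destruct (Nat.leb_spec (i * S a) w); [nia|reflexivity].
Qed.

Lemma sg_S j : sg (S j) = - sg j.
Proof. unfold sg. rewrite Nat.even_succ, <- Nat.negb_even. destruct (Nat.even j); simpl; ring. Qed.

Lemma sum_tele_k k : forall g, sum_f_R0 (fun j => if Nat.ltb j k then g j - g (S j) else g j) k = g O.
Proof.
  induction k; intros g; [reflexivity|].
  rewrite sum_shift. rewrite (sum_eq _ (fun j => if Nat.ltb j k then g (S j) - g (S (S j)) else g (S j)))
    by (intros; reflexivity).
  rewrite (IHk (fun j => g (S j))). simpl. ring.
Qed.

Lemma e_dec k j n : e (k - j) (S n) = e (k - j) n + (if Nat.ltb j k then e (k - S j) n / INR (S n) else 0).
Proof.
  destruct (k - j)%nat eqn:E.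
  - destruct (Nat.ltb_spec j k); [lia|]. rewrite !e_0; ring.
  - destruct (Nat.ltb_spec j k); [|lia]. rewrite e_SS. replace (k - S j)%nat with n0 by lia. reflexivity.
Qed.

Lemma Hr_S r m : Hr r (S m) = Hr r m + / INR (S m) ^ r.
Proof. reflexivity. Qed.

Lemma e_newton n : forall k, INR (S k) * e (S k) n =
  sum_f_R0 (fun j => sg (S j) * Hr (S j) n * e (k - j) n) k.
Proof.
  induction n; intros k.
  - rewrite e_S0, sum_zero. ring. intros j _. simpl Hr. ring.
  - set (x := / INR (S n)).
    assert (HA : sum_f_R0 (fun j => sg (S j) * Hr (S j) n * e (k - j) (S n)) k
                 = INR (S k) * e (S k) n + x * (INR k * e k n)).
    { rewrite (sum_eq _ (fun j => sg (S j) * Hr (S j) n * e (k - j) n +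
                 (if Nat.ltb j k then sg (S j) * Hr (S j) n * e (k - S j) n * x else 0)))
        by (intros j _; rewrite e_dec; destruct (Nat.ltb j k); unfold x, Rdiv; ring).
      rewrite sum_plus, <- IHn. f_equal. destruct k.
      - simpl. ring.
      - rewrite tech5. destruct (Nat.ltb_spec (S k) (S k)); [lia|]. rewrite Rplus_0_r.
        rewrite IHn, scal_sum. apply sum_eq. intros j Hj.
        destruct (Nat.ltb_spec j (S k)); [|lia]. replace (S k - S j)%nat with (k - j)%nat by lia. ring. }
    assert (HB : sum_f_R0 (fun j => sg (S j) * (/ INR (S n) ^ S j) * e (k - j) (S n)) k = x * e k n).
    { rewrite (sum_eq _ (fun j => if Nat.ltb j k then
          (sg (S j) * x ^ S j * e (k - j) n) - (sg (S (S j)) * x ^ S (S j) * e (k - S j) n)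
          else sg (S j) * x ^ S j * e (k - j) n)).
      - rewrite (sum_tele_k k (fun j => sg (S j) * x ^ S j * e (k - j) n)).
        replace (k - 0)%nat with k by lia. simpl. unfold sg; simpl. ring.
      - intros j _. rewrite e_dec, <- pow_inv. fold x. rewrite (sg_S (S j)).
        destruct (Nat.ltb j k); simpl pow; unfold Rdiv; fold x; ring. }
    rewrite e_SS.
    rewrite (sum_eq _ (fun j => sg (S j) * Hr (S j) n * e (k - j) (S n) + sg (S j) * (/ INR (S n) ^ S j) * e (k - j) (S n)))
      by (intros; rewrite Hr_S; ring).
    rewrite sum_plus, HA, HB. rewrite S_INR. unfold x, Rdiv. ring.
Qed.

Lemma Q_e k n : forall w, (w <= k)%nat -> forall w', (w' <= w)%nat ->
  Q 1 k k w' (fun i => Hr i n) = e w' n.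
Proof.
  induction w; intros Hw w' Hw'.
  - replace w' with O by lia. rewrite Q_w0 by lia. reflexivity.
  - destruct (Nat.eq_dec w' (S w)); [|apply IHw; lia]. subst w'.
    assert (H := Q_newton k 1 (S w) k (fun i => Hr i n) (le_n _) Hw ltac:(lia)).
    rewrite sum_shift in H. simpl (Nat.leb 1 0) in H. rewrite Rplus_0_l in H.
    rewrite (sum_eq _ (fun j => sg (S j) * Hr (S j) n * e (w - j) n)) in H.
    + rewrite <- e_newton in H. apply (Rmult_eq_reg_l (INR (S w))); [exact H|].
      pose proof (INR_S_pos w); lra.
    + intros j Hj. simpl (Nat.leb 1 (S j)). cbv iota. rewrite IHw by lia. reflexivity.
Qed.

Lemma P_e k n : P k (fun i => Hr i n) = e k n.
Proof. rewrite P_Q. apply (Q_e k n k (le_n _) k (le_n _)). Qed.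


(* infinite_sum f l : sum_{n=0}^N f n -> l; the term with index n corresponds to n+1. *)
Theorem mainTheorem20 (k : nat) (hk : (1 <= k)%nat) :
  infinite_sum
    (fun n => P k (fun i => Hr i (S n)) / (INR (S n) + 2) ^ 2)
    (sum_f 2 (k + 2) zeta - INR (k + 1)).
Proof.
  assert (H := is_sum_shift _ _ (v_all k)).
  destruct k as [|k']; [lia|].
  unfold v at 2 in H. rewrite e_S0 in H. fold (VV (S k')).
  replace (VV (S k')) with (VV (S k') - 0 / INR 2 ^ 2) by (unfold Rdiv; ring).
  eapply is_sum_ext; [|exact H]. intros i. cbv beta. unfold v. rewrite P_e.
  f_equal. f_equal. rewrite !S_INR. ring.
Qed.
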